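(* Let $\alpha\ge0$, $\mu\ge0$ and $n\in\mathbb{N}$. For every $f\in C_B([0,\infty))$, the function $x\mapsto T_n(f;x)$ belongs to $C_B([0,\infty))$, and $\|T_n(f)\|\le\|f\|$.
   Context: $C_B([0,\infty))$ is the space of bounded continuous real functions on $[0,\infty)$ with the norm $\|f\|=\sup_{x\ge0}|f(x)|$. For $\mu>-\tfrac12$ define $\gamma_\mu(2k)=\dfrac{2^{2k}k!\,\Gamma(k+\mu+1/2)}{\Gamma(\mu+1/2)}$ and $\gamma_\mu(2k+1)=\dfrac{2^{2k+1}k!\,\Gamma(k+\mu+3/2)}{\Gamma(\mu+1/2)}$, $k\ge0$; $e_\mu(x)=\sum_{k\ge0} x^k/\gamma_\mu(k)$; $\theta_k=0$ if $k$ is even and $\theta_k=1$ if $k$ is odd. Let $h_k^\mu(\xi,\alpha)=\gamma_\mu(k)\sum_{j=0}^{\lfloor k/2\rfloor}\dfrac{\alpha^j\xi^{k-2j}}{j!\,\gamma_\mu(k-2j)}$. For $\alpha\ge0,\mu\ge0$, $n\in\mathbb{N}$ and $x\in[0,\infty)$ define $$T_n(f;x)=\frac{1}{e^{\alpha x^2}e_\mu(nx)}\sum_{k=0}^\infty \frac{h_k^\mu(n,\alpha)}{\gamma_\mu(k)}x^k f\!\left(\frac{k+2\mu\theta_k}{n}\right).$$ *)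

(* Defs.v *)
From Stdlib Require Import Reals Lra.
From Coquelicot Require Import Coquelicot.
Open Scope R_scope.

(* Gamma ratio  Gamma(a + k) / Gamma(a)  for a > 0, i.e. the rising factorial
   (Pochhammer symbol)  a (a+1) ... (a+k-1). *)
Fixpoint gamma_ratio (a : R) (k : nat) : R :=
  match k with
  | O => 1
  | S k' => gamma_ratio a k' * (a + INR k')
  end.

Definition gamma_mu (mu : R) (m : nat) : R :=
  let k := Nat.div2 m in
  if Nat.even m
  then 2 ^ (2 * k) * INR (Factorial.fact k) * gamma_ratio (mu + / 2) k
  else 2 ^ (2 * k + 1) * INR (Factorial.fact k) * gamma_ratio (mu + / 2) (S k).

Definition e_mu (mu x : R) : R := Series (fun k => x ^ k / gamma_mu mu k).

Definition theta (k : nat) : R := if Nat.even k then 0 else 1.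

Definition h_mu (mu : R) (k : nat) (xi alpha : R) : R :=
  gamma_mu mu k *
  sum_f_R0 (fun j => alpha ^ j * xi ^ (k - 2 * j) /
                     (INR (Factorial.fact j) * gamma_mu mu (k - 2 * j))) (Nat.div2 k).

Definition T_term (alpha mu : R) (n : nat) (f : R -> R) (x : R) (k : nat) : R :=
  h_mu mu k (INR n) alpha / gamma_mu mu k * x ^ k
  * f ((INR k + 2 * mu * theta k) / INR n).

Definition T_op (alpha mu : R) (n : nat) (f : R -> R) (x : R) : R :=
  / (exp (alpha * x ^ 2) * e_mu mu (INR n * x)) * Series (T_term alpha mu n f x).

Definition continuous_on_nonneg (f : R -> R) : Prop :=
  forall x, 0 <= x -> forall eps, 0 < eps -> exists delta, 0 < delta /\
    forall y, 0 <= y -> Rabs (y - x) < delta -> Rabs (f y - f x) < eps.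

Definition bounded_on_nonneg (f : R -> R) : Prop :=
  exists M, forall x, 0 <= x -> Rabs (f x) <= M.

Definition in_CB (f : R -> R) : Prop :=
  continuous_on_nonneg f /\ bounded_on_nonneg f.

Definition sup_norm (f : R -> R) : Rbar :=
  Lub_Rbar (fun r => exists x, 0 <= x /\ r = Rabs (f x)).

(* Main.v *)
Require Import Defs.
From Stdlib Require Import Reals Lra Lia.
From Coquelicot Require Import Coquelicot.
Open Scope R_scope.

Lemma pos_bounded (a : nat -> R) (B : R) :
  (forall k, 0 <= a k) -> (forall N, sum_f_R0 a N <= B) ->
  ex_series a /\ Series a <= B.
Proof.
  intros Ha HB.
  assert (Hg : Un_growing (sum_f_R0 a)).
  { intro N; simpl; specialize (Ha (S N)); lra. }
  assert (Hub : has_ub (sum_f_R0 a)).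
  { exists B; intros x [N ->]; apply HB. }
  destruct (growing_cv _ Hg Hub) as [l Hl].
  assert (Hs : is_series a l) by (apply is_series_Reals; exact Hl).
  split; [exists l; exact Hs|].
  rewrite (is_series_unique _ _ Hs).
  assert (H1 : is_lim_seq (sum_n a) l) by exact Hs.
  assert (H2 : Rbar_le l B).
  { apply (is_lim_seq_le (sum_n a) (fun _ => B)).
    - intro N; rewrite sum_n_Reals; apply HB.
    - exact H1.
    - apply is_lim_seq_const. }
  exact H2.
Qed.

Lemma even_reindex (H : nat -> R) (k : nat) :
  sum_f_R0 (fun i => if Nat.even i then H i else 0) (2*k)%nat
    = sum_f_R0 (fun j => H (2*j)%nat) k /\
  sum_f_R0 (fun i => if Nat.even i then H i else 0) (S (2*k))
    = sum_f_R0 (fun j => H (2*j)%nat) k.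
Proof.
  induction k as [|k [IH1 IH2]].
  - simpl; split; ring.
  - replace (2 * S k)%nat with (S (S (2*k))) by lia.
    assert (E1 : sum_f_R0 (fun i => if Nat.even i then H i else 0) (S (S (2 * k)))
                 = sum_f_R0 (fun j => H (2*j)%nat) (S k)).
    { rewrite tech5, IH2, tech5.
      replace (Nat.even (S (S (2*k)))) with true
        by (rewrite Nat.even_succ_succ, Nat.even_even; reflexivity).
      replace (2 * S k)%nat with (S (S (2*k))) by lia. reflexivity. }
    split; [exact E1|].
    rewrite tech5, E1.
    replace (Nat.even (S (S (S (2*k))))) with false.
    + ring.
    + rewrite Nat.even_succ_succ. replace (S (2*k)) with (2*k+1)%nat by lia. rewrite Nat.even_odd; reflexivity.
Qed.

Lemma even_reindex' (H : nat -> R) (l : nat) :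
  sum_f_R0 (fun i => if Nat.even i then H i else 0) l
    = sum_f_R0 (fun j => H (2*j)%nat) (Nat.div2 l).
Proof.
  destruct (Nat.Even_or_Odd l) as [[k ->]|[k ->]].
  - rewrite Nat.div2_double; apply even_reindex.
  - replace (2*k+1)%nat with (S (2*k)) by lia.
    rewrite Nat.div2_succ_double; apply even_reindex.
Qed.

Lemma gamma_ratio_pos a k : 0 < a -> 0 < gamma_ratio a k.
Proof.
  intro Ha; induction k; simpl; [lra|].
  apply Rmult_lt_0_compat; [exact IHk|]. pose proof (pos_INR k); lra.
Qed.

Lemma gamma_even mu k : gamma_mu mu (2*k) =
  2 ^ (2 * k) * INR (Factorial.fact k) * gamma_ratio (mu + / 2) k.
Proof. unfold gamma_mu; rewrite Nat.div2_double, Nat.even_even; reflexivity. Qed.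

Lemma gamma_odd mu k : gamma_mu mu (S (2*k)) =
  2 ^ (2 * k + 1) * INR (Factorial.fact k) * gamma_ratio (mu + / 2) (S k).
Proof.
  unfold gamma_mu; rewrite Nat.div2_succ_double.
  replace (S (2*k)) with (2*k+1)%nat by lia. rewrite Nat.even_odd; reflexivity.
Qed.

Lemma gamma_pos mu m : 0 <= mu -> 0 < gamma_mu mu m.
Proof.
  intro Hmu. unfold gamma_mu. pose proof (INR_fact_lt_0 (Nat.div2 m)).
  assert (0 < mu + /2) by lra.
  pose proof (gamma_ratio_pos _ (Nat.div2 m) H0).
  pose proof (gamma_ratio_pos _ (S (Nat.div2 m)) H0).
  destruct (Nat.even m); apply Rmult_lt_0_compat; auto;
   apply Rmult_lt_0_compat; auto; apply pow_lt; lra.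
Qed.

Lemma gamma_step mu m : 0 <= mu ->
  INR (S m) * gamma_mu mu m <= gamma_mu mu (S m).
Proof.
  intro Hmu.
  assert (Ha : 0 < mu + /2) by lra.
  destruct (Nat.Even_or_Odd m) as [[k ->]|[k ->]].
  - rewrite gamma_even, gamma_odd. simpl gamma_ratio.
    rewrite pow_add. rewrite S_INR, mult_INR. simpl INR at 1.
    pose proof (gamma_ratio_pos _ k Ha). pose proof (INR_fact_lt_0 k).
    pose proof (pow_lt 2 (2*k) ltac:(lra)).
    set (P := 2 ^ (2*k)) in *. set (F := INR (Factorial.fact k)) in *.
    set (G := gamma_ratio (mu + /2) k) in *.
    assert (0 <= P * F * G) by (repeat apply Rmult_le_pos; lra).
    assert (E : P * 2 ^ 1 * F * (G * (mu + / 2 + INR k)) - (2 * INR k + 1) * (P * F * G)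
               = (P * F * G) * (2 * mu)) by (simpl; field).
    nra.
  - replace (S (2*k+1)) with (2 * S k)%nat by lia.
    replace (2*k+1)%nat with (S (2*k)) by lia.
    rewrite gamma_even, gamma_odd.
    replace (2 * S k)%nat with (2*k+2)%nat by lia.
    rewrite !pow_add. rewrite fact_simpl, mult_INR.
    rewrite !S_INR. replace (2*k+2)%nat with (S (S (2*k))) by lia. rewrite !S_INR, mult_INR. simpl INR. right. ring.
Qed.

Lemma gamma_ge_fact mu m : 0 <= mu -> INR (Factorial.fact m) <= gamma_mu mu m.
Proof.
  intro Hmu. induction m.
  - unfold gamma_mu; simpl; lra.
  - rewrite fact_simpl, mult_INR.
    eapply Rle_trans; [|apply gamma_step; exact Hmu].
    apply Rmult_le_compat_l; [apply pos_INR|exact IHm].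
Qed.

Definition uu z j := z ^ j / INR (Factorial.fact j).
Definition ae z i := if Nat.even i then uu z (Nat.div2 i) else 0.
Definition vv mu w m := w ^ m / gamma_mu mu m.
Definition cc alpha mu n y k := h_mu mu k (INR n) alpha / gamma_mu mu k * y ^ k.

Lemma cc_eq alpha mu n y k : 0 <= mu ->
  cc alpha mu n y k =
  sum_f_R0 (fun i => ae (alpha*y^2) i * vv mu (INR n * y) (k - i)) k.
Proof.
  intro Hmu.
  transitivity (sum_f_R0 (fun i => if Nat.even i then
      uu (alpha*y^2) (Nat.div2 i) * vv mu (INR n * y) (k - i) else 0) k).
  2:{ apply sum_eq; intros i _; unfold ae; destruct (Nat.even i); ring. }
  rewrite even_reindex'.
  unfold cc, h_mu.
  pose proof (gamma_pos mu k Hmu).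
  replace (gamma_mu mu k * sum_f_R0 (fun j => alpha ^ j * INR n ^ (k - 2 * j) /
      (INR (Factorial.fact j) * gamma_mu mu (k - 2 * j))) (Nat.div2 k) / gamma_mu mu k * y ^ k)
    with (y ^ k * sum_f_R0 (fun j => alpha ^ j * INR n ^ (k - 2 * j) /
      (INR (Factorial.fact j) * gamma_mu mu (k - 2 * j))) (Nat.div2 k)) by (field; lra).
  rewrite scal_sum. apply sum_eq; intros j Hj.
  rewrite Nat.div2_double.
  assert (Hk : (2 * j <= k)%nat) by (pose proof (Nat.div2_odd k); lia).
  assert (E : y ^ k = (y^2)^j * y^(k-2*j)) by
    (rewrite <- pow_mult, <- pow_add; f_equal; lia).
  rewrite E. unfold uu, vv. rewrite !Rpow_mult_distr.
  pose proof (gamma_pos mu (k - 2*j) Hmu). pose proof (INR_fact_lt_0 j).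
  field; lra.
Qed.

Lemma uu_nonneg z j : 0 <= z -> 0 <= uu z j.
Proof. intro; unfold uu. pose proof (INR_fact_lt_0 j). apply Rmult_le_pos; [apply pow_le; lra| left; apply Rinv_0_lt_compat; lra]. Qed.

Lemma ae_nonneg z i : 0 <= z -> 0 <= ae z i.
Proof. intro; unfold ae; destruct (Nat.even i); [apply uu_nonneg; lra| lra]. Qed.

Lemma vv_nonneg mu w m : 0 <= mu -> 0 <= w -> 0 <= vv mu w m.
Proof. intros; unfold vv. pose proof (gamma_pos mu m H). apply Rmult_le_pos; [apply pow_le; lra| left; apply Rinv_0_lt_compat; lra]. Qed.

Lemma ae_series z : 0 <= z -> ex_series (ae z) /\ Series (ae z) <= exp z.
Proof.
  intro Hz. apply pos_bounded; [intro; apply ae_nonneg; lra|].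
  intro N. unfold ae. rewrite even_reindex'.
  rewrite (sum_eq _ (fun j => z ^ j / INR (Factorial.fact j))).
  - apply exp_ge_taylor; lra.
  - intros j _; rewrite Nat.div2_double; reflexivity.
Qed.

Lemma vv_series mu w : 0 <= mu -> 0 <= w -> ex_series (vv mu w) /\ Series (vv mu w) <= exp w.
Proof.
  intros Hmu Hw. apply pos_bounded; [intro; apply vv_nonneg; lra|].
  intro N. eapply Rle_trans; [|apply (exp_ge_taylor w N Hw)].
  apply sum_Rle; intros m _. unfold vv.
  pose proof (INR_fact_lt_0 m). pose proof (gamma_ge_fact mu m Hmu).
  apply Rmult_le_compat_l; [apply pow_le; lra|].
  apply Rinv_le_contravar; lra.
Qed.

Lemma Series_nonneg' (a : nat -> R) : (forall k, 0 <= a k) -> ex_series a -> 0 <= Series a.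
Proof.
  intros Ha Hex.
  assert (E : Series (fun _ => 0) = 0).
  { rewrite (Series_ext (fun _ => 0) (fun k => 0 * a k)) by (intro; ring).
    rewrite Series_scal_l; ring. }
  rewrite <- E. apply Series_le; [intro; split; [lra|apply Ha]|exact Hex].
Qed.

Lemma e_mu_pos mu w : 0 <= mu -> 0 <= w -> 0 < e_mu mu w.
Proof.
  intros Hmu Hw. destruct (vv_series mu w Hmu Hw) as [Hex _].
  unfold e_mu. fold (vv mu w).
  rewrite Series_incr_1 by exact Hex.
  assert (H0 : vv mu w 0 = 1) by (unfold vv, gamma_mu; simpl; field).
  rewrite H0.
  assert (0 <= Series (fun k => vv mu w (S k))).
  { apply Series_nonneg'; [intro; apply vv_nonneg; lra|].
    apply (ex_series_incr_1 (vv mu w)); exact Hex. }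
  lra.
Qed.

Lemma cc_series alpha mu n y : 0 <= alpha -> 0 <= mu -> 0 <= y ->
  (forall k, 0 <= cc alpha mu n y k) /\ ex_series (cc alpha mu n y) /\
  Series (cc alpha mu n y) <= exp (alpha * y ^ 2) * e_mu mu (INR n * y).
Proof.
  intros Ha Hmu Hy.
  assert (Hz : 0 <= alpha * y ^ 2) by (apply Rmult_le_pos; [lra| apply pow_le; lra]).
  assert (Hw : 0 <= INR n * y) by (apply Rmult_le_pos; [apply pos_INR|lra]).
  destruct (ae_series _ Hz) as [Ea Sa].
  destruct (vv_series mu _ Hmu Hw) as [Ev Sv].
  pose proof (e_mu_pos mu _ Hmu Hw) as Hpos.
  assert (Hm := is_series_mult_pos _ _ _ _ (Series_correct _ Ea) (Series_correct _ Ev)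
     (fun k => ae_nonneg _ k Hz) (fun k => vv_nonneg mu _ k Hmu Hw)).
  assert (Hc : is_series (cc alpha mu n y) (Series (ae (alpha * y ^ 2)) * Series (vv mu (INR n * y)))).
  { eapply is_series_ext; [|exact Hm]. intro k; simpl. rewrite cc_eq by exact Hmu. reflexivity. }
  split; [|split].
  - intro k. rewrite cc_eq by exact Hmu. apply cond_pos_sum. intro i.
    apply Rmult_le_pos; [apply ae_nonneg; lra| apply vv_nonneg; lra].
  - exists (Series (ae (alpha * y ^ 2)) * Series (vv mu (INR n * y))); exact Hc.
  - rewrite (is_series_unique _ _ Hc).
    assert (Hev : Series (vv mu (INR n * y)) = e_mu mu (INR n * y)) by reflexivity.
    rewrite Hev. apply Rmult_le_compat_r; lra.
Qed.

Lemma arg_nonneg mu n k : 0 <= mu -> (0 < n)%nat -> 0 <= (INR k + 2 * mu * theta k) / INR n.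
Proof.
  intros Hmu Hn. apply Rmult_le_pos.
  - assert (0 <= theta k) by (unfold theta; destruct (Nat.even k); lra).
    pose proof (pos_INR k). assert (0 <= mu * theta k) by (apply Rmult_le_pos; lra). lra.
  - left; apply Rinv_0_lt_compat, lt_0_INR; lia.
Qed.

Lemma T_bound alpha mu n f M x : 0 <= alpha -> 0 <= mu -> (0 < n)%nat ->
  (forall y, 0 <= y -> Rabs (f y) <= M) -> 0 <= x ->
  ex_series (T_term alpha mu n f x) /\ Rabs (T_op alpha mu n f x) <= M.
Proof.
  intros Ha Hmu Hn Hf Hx.
  destruct (cc_series alpha mu n x Ha Hmu Hx) as [Cn [Ce Cs]].
  assert (HM : 0 <= M) by (specialize (Hf 0 (Rle_refl 0)); pose proof (Rabs_pos (f 0)); lra).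
  assert (Hb : forall k, Rabs (T_term alpha mu n f x k) <= M * cc alpha mu n x k).
  { intro k. change (T_term alpha mu n f x k) with
      (cc alpha mu n x k * f ((INR k + 2 * mu * theta k) / INR n)).
    rewrite Rabs_mult, (Rabs_pos_eq _ (Cn k)), Rmult_comm.
    apply Rmult_le_compat_r; [apply Cn|]. apply Hf, arg_nonneg; auto. }
  assert (HMe : ex_series (fun k => M * cc alpha mu n x k)).
  { apply (ex_series_scal_l M) in Ce. exact Ce. }
  assert (Habs : ex_series (fun k => Rabs (T_term alpha mu n f x k))).
  { apply (@ex_series_le R_AbsRing R_CompleteNormedModule _ (fun k => M * cc alpha mu n x k)); [|exact HMe].
    intro k. change (norm (Rabs (T_term alpha mu n f x k))) with (Rabs (Rabs (T_term alpha mu n f x k))).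
    rewrite Rabs_Rabsolu. apply Hb. }
  split; [apply ex_series_Rabs; exact Habs|].
  assert (H1 : Rabs (Series (T_term alpha mu n f x)) <= M * (exp (alpha * x ^ 2) * e_mu mu (INR n * x))).
  { eapply Rle_trans; [apply Series_Rabs; exact Habs|].
    eapply Rle_trans; [apply (Series_le _ (fun k => M * cc alpha mu n x k))|].
    - intro k; split; [apply Rabs_pos|apply Hb].
    - exact HMe.
    - rewrite Series_scal_l. apply Rmult_le_compat_l; assumption. }
  assert (Hw : 0 <= INR n * x) by (apply Rmult_le_pos; [apply pos_INR|lra]).
  pose proof (e_mu_pos mu _ Hmu Hw). pose proof (exp_pos (alpha * x ^ 2)).
  assert (HE : 0 < exp (alpha * x ^ 2) * e_mu mu (INR n * x)) by (apply Rmult_lt_0_compat; lra).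
  unfold T_op. rewrite Rabs_mult, Rabs_inv, (Rabs_pos_eq _ (Rlt_le _ _ HE)).
  apply (Rmult_le_reg_l (exp (alpha * x ^ 2) * e_mu mu (INR n * x))); [exact HE|].
  rewrite <- Rmult_assoc, Rinv_r by lra. lra.
Qed.

From Stdlib Require Import FunctionalExtensionality.

Lemma radius_gt a : (forall r, 0 <= r -> CV_disk a r) -> forall x, Rbar_lt (Rabs x) (CV_radius a).
Proof.
  intros H x.
  assert (H0 : Rbar_le (Rabs x + 1) (CV_radius a)).
  { unfold CV_radius. destruct (Lub_Rbar_correct (CV_disk a)) as [Hub _].
    apply Hub, H. pose proof (Rabs_pos x); lra. }
  revert H0. destruct (CV_radius a); simpl; intros; try lra; tauto.
Qed.

Lemma cpt_eps g x : continuity_pt g x -> forall eps, 0 < eps -> exists d, 0 < d /\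
  forall y, Rabs (y - x) < d -> Rabs (g y - g x) < eps.
Proof.
  intros H eps He. destruct (H eps He) as [d [Hd Hy]]. exists d; split; [exact Hd|].
  intros y Hyx. destruct (Req_dec y x) as [->|Hne].
  - rewrite Rminus_diag, Rabs_R0; lra.
  - apply Hy. split; [split; [exact I| auto]|]. simpl; unfold R_dist; exact Hyx.
Qed.

Lemma cont_T alpha mu n f M x0 : 0 <= alpha -> 0 <= mu -> (0 < n)%nat ->
  (forall y, 0 <= y -> Rabs (f y) <= M) -> 0 <= x0 ->
  continuity_pt (T_op alpha mu n f) x0.
Proof.
  intros Ha Hmu Hn Hf Hx.
  set (af := fun k => h_mu mu k (INR n) alpha / gamma_mu mu k * f ((INR k + 2 * mu * theta k) / INR n)).
  set (bg := fun k => / gamma_mu mu k).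
  assert (EN : (fun x => Series (T_term alpha mu n f x)) = PSeries af).
  { apply functional_extensionality; intro x. unfold PSeries. apply Series_ext; intro k.
    unfold T_term, af. ring. }
  assert (ED : (fun x => e_mu mu (INR n * x)) = comp (PSeries bg) (fun x => INR n * x)).
  { apply functional_extensionality; intro x. unfold comp, PSeries, e_mu. apply Series_ext; intro k.
    unfold bg. unfold Rdiv. ring. }
  assert (CN : continuity_pt (fun x => Series (T_term alpha mu n f x)) x0).
  { rewrite EN. apply PSeries_continuity, radius_gt. intros r Hr.
    unfold CV_disk.
    destruct (cc_series alpha mu n r Ha Hmu Hr) as [Cn [Ce _]].
    apply (@ex_series_le R_AbsRing R_CompleteNormedModule _ (fun k => M * cc alpha mu n r k)).
    - intro k. change (norm (Rabs (af k * r ^ k))) with (Rabs (Rabs (af k * r ^ k))).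
      rewrite Rabs_Rabsolu.
      replace (af k * r ^ k) with (cc alpha mu n r k * f ((INR k + 2 * mu * theta k) / INR n))
        by (unfold af, cc; ring).
      rewrite Rabs_mult, (Rabs_pos_eq _ (Cn k)), Rmult_comm.
      apply Rmult_le_compat_r; [apply Cn|]. apply Hf, arg_nonneg; auto.
    - apply (ex_series_scal_l M) in Ce. exact Ce. }
  assert (CE : continuity_pt (fun x => e_mu mu (INR n * x)) x0).
  { rewrite ED. apply continuity_pt_comp.
    - apply derivable_continuous_pt, ex_derive_Reals_0. auto_derive; trivial.
    - apply PSeries_continuity, radius_gt. intros r Hr.
      unfold CV_disk.
      destruct (vv_series mu (Rabs r) Hmu (Rabs_pos r)) as [Ev _].
      eapply ex_series_ext; [|exact Ev]. intro k. unfold vv, bg.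
      pose proof (gamma_pos mu k Hmu).
      rewrite Rabs_mult, RPow_abs, Rabs_inv, (Rabs_pos_eq (gamma_mu mu k)) by lra.
      unfold Rdiv; apply Rmult_comm. }
  assert (CX : continuity_pt (fun x => exp (alpha * x ^ 2)) x0).
  { apply derivable_continuous_pt, ex_derive_Reals_0. auto_derive; trivial. }
  assert (Hw : 0 <= INR n * x0) by (apply Rmult_le_pos; [apply pos_INR|lra]).
  pose proof (e_mu_pos mu _ Hmu Hw). pose proof (exp_pos (alpha * x0 ^ 2)).
  assert (CD : continuity_pt (fun x => exp (alpha * x ^ 2) * e_mu mu (INR n * x)) x0)
    by exact (continuity_pt_mult _ _ x0 CX CE).
  assert (CI : continuity_pt (fun x => / (exp (alpha * x ^ 2) * e_mu mu (INR n * x))) x0).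
  { apply (continuity_pt_inv _ x0 CD). apply Rgt_not_eq, Rmult_lt_0_compat; lra. }
  exact (continuity_pt_mult _ _ x0 CI CN).
Qed.

Theorem mainTheorem5 (alpha mu : R) (n : nat) :
  0 <= alpha -> 0 <= mu -> (0 < n)%nat ->
  forall f : R -> R, in_CB f ->
    (forall x, 0 <= x -> ex_series (T_term alpha mu n f x)) /\
    in_CB (T_op alpha mu n f) /\
    Rbar_le (sup_norm (T_op alpha mu n f)) (sup_norm f).
Proof.
  intros Ha Hmu Hn f [_ [M HM]].
  split; [intros x Hx; exact (proj1 (T_bound alpha mu n f M x Ha Hmu Hn HM Hx))|].
  split; [split|].
  - intros x Hx eps He.
    destruct (cpt_eps _ _ (cont_T alpha mu n f M x Ha Hmu Hn HM Hx) eps He) as [d [Hd H]].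
    exists d; split; [exact Hd|]. intros y _ Hy; apply H; exact Hy.
  - exists M; intros x Hx; exact (proj2 (T_bound alpha mu n f M x Ha Hmu Hn HM Hx)).
  - unfold sup_norm.
    destruct (Lub_Rbar_correct (fun r => exists x, 0 <= x /\ r = Rabs (T_op alpha mu n f x))) as [_ Hlub].
    apply Hlub. intros r [x [Hx ->]].
    destruct (Lub_Rbar_correct (fun r => exists x, 0 <= x /\ r = Rabs (f x))) as [Hubf _].
    revert Hubf.
    destruct (Lub_Rbar (fun r => exists x, 0 <= x /\ r = Rabs (f x))) as [S| |]; intro Hubf.
    + simpl. apply (T_bound alpha mu n f S x Ha Hmu Hn); [|exact Hx].
      intros y Hy. apply (Hubf (Rabs (f y))). exists y; split; auto.
    + simpl; trivial.
    + exfalso. apply (Hubf (Rabs (f 0))). exists 0; split; [lra|reflexivity].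
Qed.
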